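(* Let $A,B\in \mathbb{R}^{m\times n}$ with $m<n$ and $b\in \mathbb{R}^m$. If the equation $Ax-B|x|=b$ has a solution $x_*$ with sign pattern $s=\operatorname{sign}(x_* )\in\{-1,0,1\}^n$ such that $x_*$ has more than $\operatorname{rank}(A\operatorname{diag}(s) - B)$ nonzero entries, then $Ax-B|x|=b$ has infinitely many solutions with the sign pattern $s$.
   Context: $|x|$ is the entrywise absolute value; $\operatorname{diag}(s)$ is the diagonal matrix with diagonal $s$; $\operatorname{sign}$ is applied entrywise with $\operatorname{sign}(r)=1,0,-1$ for $r>0,r=0,r<0$. A vector $x$ has sign pattern $s$ if $\operatorname{sign}(x_{(i)})=s_{(i)}$ for all $i$. *)

(* Defs.v *)
From mathcomp Require Import all_boot all_order all_algebra.
From mathcomp Require Import classical_sets cardinality.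
Set Implicit Arguments. Unset Strict Implicit. Unset Printing Implicit Defensive.
Import Order.TTheory GRing.Theory Num.Theory.
Local Open Scope ring_scope.

Definition absv (R : realDomainType) (n : nat) (x : 'cV[R]_n) : 'cV[R]_n :=
  \col_i `|x i ord0|.

Definition signr (R : realDomainType) (r : R) : R :=
  if 0 < r then 1 else if r < 0 then -1 else 0.

Definition signv (R : realDomainType) (n : nat) (x : 'cV[R]_n) : 'cV[R]_n :=
  \col_i signr (x i ord0).

Definition diagv (R : realDomainType) (n : nat) (s : 'cV[R]_n) : 'M[R]_n :=
  diag_mx s^T.

Definition nnz (R : realDomainType) (n : nat) (x : 'cV[R]_n) : nat :=
  #|[set i : 'I_n | x i ord0 != 0]|.

Definition sol_sign (R : realDomainType) (m n : nat) (A B : 'M[R]_(m, n))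
  (b : 'cV[R]_m) (s : 'cV[R]_n) : set 'cV[R]_n :=
  [set x | A *m x - B *m absv x = b /\ signv x = s].

(* Main.v *)
Require Import Defs.
From mathcomp Require Import all_boot all_order all_algebra.
From mathcomp Require Import classical_sets cardinality.
From mathcomp Require Import lra.
Import Order.TTheory GRing.Theory Num.Theory.
Local Open Scope ring_scope.

Lemma entry (R : realFieldType) (x uu t : R) : 0 <= t ->
  (x = 0 -> uu = 0) -> (x != 0 -> t * `|uu| < `|x|) ->
  signr (x + t * (signr x * uu)) = signr x /\
  `|x + t * (signr x * uu)| = `|x| + t * uu.
Proof.
move=> t0 h1 h2.
have hp : `|t * uu| = t * `|uu| by rewrite normrM ger0_norm.
have l1 : t * uu <= `|t * uu| by apply: ler_norm.
have l2 : - `|t * uu| <= t * uu by apply: lerNnormlW.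
rewrite /signr; case: (ltrgtP x 0) => hx.
- have hx' : x != 0 by rewrite ltr0_neq0.
  move: (h2 hx'); rewrite (ltr0_norm hx) => h.
  have hy : x + t * (-1 * uu) < 0 by lra.
  rewrite (ltr0_norm hy) (lt_gtF hy) hy; split => //; lra.
- move: (h2 (lt0r_neq0 hx)); rewrite (gtr0_norm hx) => h.
  have hy : 0 < x + t * (1 * uu) by lra.
  by rewrite (gtr0_norm hy) hy; split => //; lra.
- by rewrite (h1 hx) hx !(mul0r, mulr0, addr0) normr0 ltxx.
Qed.
Lemma kernel_vec (R : fieldType) m n (M : 'M[R]_(m,n)) (S : {set 'I_n}) :
  (\rank M < #|S|)%N ->
  exists u : 'cV[R]_n, M *m u = 0 /\ u != 0 /\ forall j, j \notin S -> u j ord0 = 0.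
Proof.
move=> hr.
pose f := fun i : 'I_#|S| => @enum_val _ (mem S) i.
pose E : 'M[R]_(#|S|, n) := \matrix_(i, j) (f i == j)%:R.
pose X := E *m M^T.
pose K := kermx X.
have rK : (0 < \rank K)%N.
  rewrite mxrank_ker subn_gt0; apply: leq_ltn_trans hr.
  by rewrite -(mxrank_tr M) mxrankM_maxr.
have [i0 [j0 hK]] : exists i0 j0, K i0 j0 != 0.
  case: (pickP (fun ij : 'I_#|S| * 'I_#|S| => K ij.1 ij.2 != 0)) => [[i j] h|hn].
    by exists i, j.
  have K0 : K = 0.
    apply/matrixP => i j; rewrite [RHS]mxE; exact/eqP/negbFE/(hn (i, j)).
  by move: rK; rewrite K0 mxrank0.
pose w := row i0 K.
have hw : w *m X = 0 by rewrite /w -row_mul mulmx_ker row0.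
exists (w *m E)^T; split; last split.
- apply: trmx_inj; rewrite trmx_mul trmxK trmx0 -mulmxA; exact: hw.
- apply/negP => /eqP h; move: hK.
  have : (w *m E)^T (f j0) ord0 = 0 by rewrite h mxE.
  rewrite !mxE (bigD1 j0) //= big1 ?addr0.
    by rewrite !mxE eqxx mulr1 => ->; rewrite eqxx.
  move=> i hi; rewrite /E !mxE (_ : (f i == f j0) = false) ?mulr0 //.
  by apply/negbTE; apply: contra hi => /eqP /enum_val_inj ->.
- move=> j hj; rewrite !mxE big1 // => i _; rewrite /E !mxE.
  have hS : f i \in S by apply: enum_valP.
  case: eqP => [e|_]; last by rewrite mulr0.
  by move: hS; rewrite e (negbTE hj).
Qed.

Theorem theorem3p4 (R : realFieldType) (m n : nat) (A B : 'M[R]_(m, n))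
  (b : 'cV[R]_m) (xs : 'cV[R]_n) :
  (m < n)%N ->
  A *m xs - B *m absv xs = b ->
  (\rank (A *m diagv (signv xs) - B)%R < nnz xs)%N ->
  infinite_set (sol_sign A B b (signv xs)).
Proof.
move=> _ hb hr.
set s := signv xs.
have [u [hMu [hu0 hsupp]]] := @kernel_vec _ _ _ _ [set i | xs i ord0 != 0] hr.
have supp : forall j, xs j ord0 = 0 -> u j ord0 = 0.
  by move=> j hj; apply: hsupp; rewrite inE hj eqxx.
pose c : R := 1 + \sum_j `|u j ord0| / `|xs j ord0|.
have cgt : forall j, xs j ord0 != 0 -> `|u j ord0| < c * `|xs j ord0|.
  move=> j hj; rewrite -ltr_pdivrMr ?normr_gt0 //.
  rewrite /c (bigD1 j) //= addrCA ltrDl ltr_pwDl //.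
  by apply: sumr_ge0 => i _; rewrite divr_ge0.
have c0 : 0 < c.
  have hs : 0 <= \sum_j `|u j ord0| / `|xs j ord0|.
    by apply: sumr_ge0 => i _; rewrite divr_ge0.
  rewrite /c; lra.
pose v : 'cV[R]_n := \col_j (s j ord0 * u j ord0).
pose t (N : nat) : R := (c * N.+1%:R)^-1.
have t0 : forall N, 0 <= t N by move=> N; rewrite invr_ge0 mulr_ge0 // ltW.
have tbound : forall N j, xs j ord0 != 0 -> t N * `|u j ord0| < `|xs j ord0|.
  move=> N j hj; rewrite mulrC ltr_pdivrMr ?mulr_gt0 //.
  have := cgt j hj; have : 1 <= N.+1%:R :> R by rewrite ler1n.
  have : 0 < `|xs j ord0| by rewrite normr_gt0.
  move=> h1 h2 h3.
  have h4 : 0 <= (c * `|xs j ord0|) * (N.+1%:R - 1).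
    by apply: mulr_ge0; [rewrite mulr_ge0 // ltW | rewrite subr_ge0].
  nra.
pose g (N : nat) : 'cV[R]_n := xs + t N *: v.
have hent : forall N j, signr (g N j ord0) = signr (xs j ord0) /\
    `|g N j ord0| = `|xs j ord0| + t N * u j ord0.
  move=> N j; rewrite /g !mxE.
  apply: entry; [exact: t0 | exact: supp | exact: tbound].
have hsol : forall N, sol_sign A B b s (g N).
  move=> N; split; last first.
    by apply/matrixP => j k; rewrite (ord1 k) /s /signv [LHS]mxE [RHS]mxE (proj1 (hent N j)).
  have habs : absv (g N) = absv xs + t N *: u.
    by apply/matrixP => j k; rewrite (ord1 k) /absv [LHS]mxE (proj2 (hent N j)) !mxE.
  have hv : v = diagv s *m u.
    by rewrite /diagv mul_diag_mx; apply/matrixP => j k; rewrite (ord1 k) !mxE.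
  rewrite habs /g hv !mulmxDr -!scalemxAr -hb.
  have : (A *m diagv s - B) *m u = 0 by [].
  rewrite mulmxBl -mulmxA => /eqP; rewrite subr_eq0 => /eqP ->.
  by rewrite opprD addrACA subrr addr0.
have vne : v != 0.
  apply: contra hu0 => /eqP hv; apply/eqP/matrixP => j k; rewrite (ord1 k) mxE.
  have := congr1 (fun M : 'cV[R]_n => M j ord0) hv; rewrite !mxE /signr.
  case: (boolP (xs j ord0 == 0)) => [/eqP /supp //|hj].
  case: (ltrgtP (xs j ord0) 0) => hx.
  - by rewrite mulN1r => /eqP; rewrite oppr_eq0 => /eqP.
  - by rewrite mul1r.
  - by move: hj; rewrite hx eqxx.
have ginj : forall N1 N2, g N1 = g N2 -> N1 = N2.
  move=> N1 N2 /eqP; rewrite /g -subr_eq0 opprD addrACA subrr add0r -scalerBl scaler_eq0 (negbTE vne) orbF.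
  rewrite subr_eq0 /t => /eqP /invr_inj /(mulfI (lt0r_neq0 c0)) h.
  by apply/eqP; rewrite -eqSS -(eqr_nat R) h.
move=> fin.
apply: infinite_nat.
have fp : finite_set (g @^-1` sol_sign A B b s).
  by apply: finite_preimage fin => N1 N2 _ _; apply: ginj.
by apply: (sub_finite_set _ fp) => N _; apply: hsol.
Qed.
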